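(* Let $F$ be a Banach lattice and $\tau$ a linear topology on $F$ weaker than the norm topology, with the Kadec-Pelczynski property. Then (i) $\tau$ agrees with the norm topology on every dispersed closed subspace of $F$; (ii) every DNS operator $T:F\to H$ into a Banach space complements $\tau$.
   Context: $\mathrm{S}_F$ is the unit sphere. A sequence $(e_n)\subset\mathrm{S}_F$ is almost disjoint if there is a disjoint $(f_n)\subset F$ ($|f_n|\wedge|f_m|=0$, $n\ne m$) with $\|e_n-f_n\|\to0$; a closed subspace is dispersed if it contains no almost disjoint sequence. $\tau$ has the Kadec-Pelczynski property if whenever $(f_p)_{p\in P}\subset\mathrm{S}_F$ is a $\tau$-null net and $(q_n)_{n\in\mathbb{N}}\subset P$, there are $p_n\ge q_n$ in $P$ with $(f_{p_n})_n$ almost disjoint. $T$ is DNS if no disjoint $(f_n)\subset\mathrm{S}_F$ has $\|Tf_n\|\to0$. $T$ complements $\tau$ if there is no net in $\mathrm{S}_F$ which is $\tau$-null and along which $\|Tf_p\|\to0$. *)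

(* Defs.v *)
From HB Require Import structures.
From mathcomp Require Import all_boot all_order all_algebra.
From mathcomp Require Import all_classical all_reals all_analysis.
Import Order.TTheory GRing.Theory Num.Theory.
Import numFieldNormedType.Exports.
Set Implicit Arguments. Unset Strict Implicit. Unset Printing Implicit Defensive.
Local Open Scope classical_set_scope.
Local Open Scope ring_scope.

(* Together with
   completeness of F (required in the theorem) this is a Banach lattice. *)
Record banach_lattice (R : realType) (F : normedModType R) := BanachLattice {
  bl_le : F -> F -> Prop;
  bl_join : F -> F -> F;
  bl_le_refl : forall x, bl_le x x;
  bl_le_anti : forall x y, bl_le x y -> bl_le y x -> x = y;
  bl_le_trans : forall x y z, bl_le x y -> bl_le y z -> bl_le x z;
  bl_le_add : forall x y z, bl_le x y -> bl_le (x + z) (y + z);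
  bl_le_scale : forall (a : R) x y, 0 <= a -> bl_le x y -> bl_le (a *: x) (a *: y);
  bl_join_ubl : forall x y, bl_le x (bl_join x y);
  bl_join_ubr : forall x y, bl_le y (bl_join x y);
  bl_join_least : forall x y z, bl_le x z -> bl_le y z -> bl_le (bl_join x y) z;
  bl_norm_mono : forall x y,
    bl_le (bl_join x (- x)) (bl_join y (- y)) -> `|x| <= `|y|
}.

Section BL.
Context {R : realType} {F : normedModType R} (L : banach_lattice F).

Definition bl_meet (x y : F) : F := - bl_join L (- x) (- y).
Definition bl_abs (x : F) : F := bl_join L x (- x).
Definition bl_disjoint (x y : F) : Prop := bl_meet (bl_abs x) (bl_abs y) = 0.
Definition disjoint_seq (f : nat -> F) : Prop :=
  forall n m : nat, n <> m -> bl_disjoint (f n) (f m).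

Definition almost_disjoint (e : nat -> F) : Prop :=
  (forall n, `|e n| = 1) /\
  exists g : nat -> F, disjoint_seq g /\
    ((fun n => `|e n - g n|) : nat -> R) @ \oo --> (0 : R).

Definition closed_subspace (E : set F) : Prop :=
  E 0 /\ (forall x y, E x -> E y -> E (x + y)) /\
  (forall (a : R) x, E x -> E (a *: x)) /\ closed E.

Definition dispersed (E : set F) : Prop :=
  closed_subspace E /\ ~ (exists e : nat -> F, (forall n, E (e n)) /\ almost_disjoint e).
End BL.

Record linear_topology (R : realType) (F : normedModType R) := LinearTopology {
  lt_open : set F -> Prop;
  lt_openT : lt_open setT;
  lt_openU : forall (I : Type) (U : I -> set F),
     (forall i, lt_open (U i)) -> lt_open (\bigcup_(i in [set: I]) U i);
  lt_openI : forall U V, lt_open U -> lt_open V -> lt_open (U `&` V);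
  lt_add_cont : forall U (x y : F), lt_open U -> U (x + y) ->
     exists V W, lt_open V /\ lt_open W /\ V x /\ W y /\
       (forall v w, V v -> W w -> U (v + w));
  lt_scale_cont : forall U (a : R) (x : F), lt_open U -> U (a *: x) ->
     exists e : R, 0 < e /\ exists V, lt_open V /\ V x /\
       (forall (b : R) v, `|b - a| < e -> V v -> U (b *: v))
}.

Definition weaker_than_norm {R : realType} {F : normedModType R}
  (tau : linear_topology F) : Prop :=
  forall U, lt_open tau U -> open U.

Definition directed {P : Type} (le : P -> P -> Prop) : Prop :=
  (exists p : P, True) /\ (forall p, le p p) /\
  (forall p q r, le p q -> le q r -> le p r) /\
  (forall p q, exists r, le p r /\ le q r).

Definition tau_null {R : realType} {F : normedModType R}
  (tau : linear_topology F) {P : Type} (le : P -> P -> Prop) (f : P -> F) : Prop :=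
  forall U, lt_open tau U -> U 0 -> exists p0, forall p, le p0 p -> U (f p).

Definition net_to_zero {R : realType} {P : Type} (le : P -> P -> Prop)
  (g : P -> R) : Prop :=
  forall e : R, 0 < e -> exists p0, forall p, le p0 p -> `|g p| < e.

Definition kadec_pelczynski {R : realType} {F : normedModType R}
  (L : banach_lattice F) (tau : linear_topology F) : Prop :=
  forall (P : Type) (le : P -> P -> Prop), directed le ->
  forall f : P -> F, (forall p, `|f p| = 1) -> tau_null tau le f ->
  forall q : nat -> P, exists p : nat -> P,
    (forall n, le (q n) (p n)) /\ almost_disjoint L (fun n => f (p n)).

Definition DNS {R : realType} {F H : normedModType R}
  (L : banach_lattice F) (T : F -> H) : Prop :=
  ~ exists f : nat -> F, disjoint_seq L f /\ (forall n, `|f n| = 1) /\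
      ((fun n => `|T (f n)|) : nat -> R) @ \oo --> (0 : R).

Definition complements {R : realType} {F H : normedModType R}
  (tau : linear_topology F) (T : F -> H) : Prop :=
  ~ exists (P : Type) (le : P -> P -> Prop) (f : P -> F),
      directed le /\ (forall p, `|f p| = 1) /\ tau_null tau le f /\
      net_to_zero le (fun p => `|T (f p)|).

(* Main.v *)
Require Import Defs.
From HB Require Import structures.
From mathcomp Require Import all_boot all_order all_algebra.
From mathcomp Require Import all_classical all_reals all_analysis.
From mathcomp Require Import ring lra.
Import Order.TTheory GRing.Theory Num.Theory.
Import numFieldNormedType.Exports.
Local Open Scope classical_set_scope.
Local Open Scope ring_scope.
Section Lat.
Context {R : realType} {F : normedModType R} (L : banach_lattice F).
Local Notation le := (bl_le L).
Local Notation jn := (bl_join L).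

Lemma le_sub0 {x y} : le x y -> le 0 (y - x).
Proof. by move=> h; have := bl_le_add (- x) h; rewrite subrr. Qed.

Lemma le_from0 {x y} : le 0 (y - x) -> le x y.
Proof. by move=> h; have := bl_le_add x h; rewrite add0r subrK. Qed.

Lemma le_neg {x y} : le x y -> le (- y) (- x).
Proof.
move=> h; have := bl_le_add (- x - y) h.
by rewrite addrA subrr add0r addrCA subrr addr0.
Qed.

Lemma join_comm x y : jn x y = jn y x.
Proof.
by apply: bl_le_anti; apply: bl_join_least;
  (apply: bl_join_ubl || apply: bl_join_ubr).
Qed.

Lemma abs_ge0 x : le 0 (bl_abs L x).
Proof.
set a := bl_abs L x.
have h1 : le x a by exact: bl_join_ubl.
have h2 : le (- x) a by exact: bl_join_ubr.
have h3 := bl_le_add (- x) h1; rewrite subrr in h3.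
have h4 := bl_le_add a h2; rewrite addrC in h4.
have h5 := bl_le_trans h3 h4.
have hh : 0 <= 2^-1 :> R by rewrite invr_ge0.
have h6 := @bl_le_scale _ _ L (2^-1) _ _ hh h5.
have e2 : a + a = 2%:R *: a by rewrite scaler_nat mulr2n.
by move: h6; rewrite scaler0 e2 scalerA mulVf ?pnatr_eq0 // scale1r.
Qed.

Lemma meet_ge0 {a b} : le 0 a -> le 0 b -> le 0 (bl_meet L a b).
Proof.
move=> ha hb; rewrite /bl_meet -oppr0; apply: le_neg.
by apply: bl_join_least; rewrite -oppr0; apply: le_neg.
Qed.

Lemma meet_le {a b a' b'} : le a a' -> le b b' -> le (bl_meet L a b) (bl_meet L a' b').
Proof.
move=> ha hb; rewrite /bl_meet; apply: le_neg; apply: bl_join_least.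
  exact: bl_le_trans (le_neg ha) (bl_join_ubl L _ _).
exact: bl_le_trans (le_neg hb) (bl_join_ubr L _ _).
Qed.

Lemma scale_join (c : R) x y : 0 < c -> c *: jn x y = jn (c *: x) (c *: y).
Proof.
move=> c0; apply: bl_le_anti; last first.
  by apply: bl_join_least; apply: bl_le_scale (ltW c0) _;
    [exact: bl_join_ubl | exact: bl_join_ubr].
set z := jn (c *: x) (c *: y).
have hz : z = c *: (c^-1 *: z) by rewrite scalerA divff ?gt_eqF // scale1r.
rewrite [X in le _ X]hz; apply: bl_le_scale (ltW c0) _.
have ci : 0 <= c^-1 by rewrite invr_ge0 ltW.
apply: bl_join_least.
  have := bl_le_scale ci (bl_join_ubl L (c *: x) (c *: y)).
  by rewrite scalerA mulVf ?gt_eqF // scale1r.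
have := bl_le_scale ci (bl_join_ubr L (c *: x) (c *: y)).
by rewrite scalerA mulVf ?gt_eqF // scale1r.
Qed.

Lemma abs_scale {c : R} x : 0 < c -> bl_abs L (c *: x) = c *: bl_abs L x.
Proof. by move=> c0; rewrite /bl_abs scale_join // scalerN. Qed.

Lemma meet_scale {c : R} a b : 0 < c -> bl_meet L (c *: a) (c *: b) = c *: bl_meet L a b.
Proof. by move=> c0; rewrite /bl_meet -!scalerN -scale_join // scalerN. Qed.

Lemma scale_le_pos {c M : R} {a} : le 0 a -> c <= M -> le (c *: a) (M *: a).
Proof.
move=> ha hc; apply: le_from0; rewrite -scalerBl.
have := bl_le_scale (a := M - c) _ ha; rewrite scaler0; apply.
by rewrite subr_ge0.
Qed.

Lemma disjoint_scale (c d : R) g h : 0 < c -> 0 < d ->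
  bl_disjoint L g h -> bl_disjoint L (c *: g) (d *: h).
Proof.
move=> c0 d0; rewrite /bl_disjoint => gh.
rewrite (abs_scale g c0) (abs_scale h d0).
set M := Num.max c d.
have M0 : 0 < M by rewrite lt_max c0.
have ag := abs_ge0 g; have ah := abs_ge0 h.
have cg : le 0 (c *: bl_abs L g).
  by have := bl_le_scale (ltW c0) ag; rewrite scaler0.
have dh : le 0 (d *: bl_abs L h).
  by have := bl_le_scale (ltW d0) ah; rewrite scaler0.
have mc : c <= M by rewrite le_max lexx.
have md : d <= M by rewrite le_max lexx orbT.
have h1 := meet_le (scale_le_pos ag mc) (scale_le_pos ah md).
rewrite meet_scale // gh scaler0 in h1.
exact: bl_le_anti h1 (meet_ge0 cg dh).
Qed.
End Lat.
Section Top.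
Context {R : realType} {F : normedModType R} (tau : linear_topology F).

Lemma open_local (S : set F) :
  (forall y, S y -> exists V, lt_open tau V /\ V y /\ V `<=` S) -> lt_open tau S.
Proof.
move=> hS.
have hc : forall i : {y | S y}, exists V, lt_open tau V /\ V (sval i) /\ V `<=` S.
  by case=> y Sy; exact: hS.
have [Vf HV] := choice hc.
have -> : S = \bigcup_(i in [set: {y | S y}]) Vf i.
  apply/seteqP; split => [y Sy|y [i _ Viy]].
    by exists (exist _ y Sy) => //; have [_ []] := HV (exist _ y Sy).
  by have [_ [_]] := HV i; apply.
by apply: lt_openU => i; have [] := HV i.
Qed.

Lemma open_translate (W : set F) (x : F) :
  lt_open tau W -> lt_open tau [set y | W (y - x)].
Proof.
move=> oW; apply: open_local => y /= Wy.
have [V [W' [oV [oW' [Vy [W'x H]]]]]] := lt_add_cont oW Wy.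
by exists V; split; [|split] => // v Vv /=; apply: H.
Qed.

Lemma open_scale (W : set F) (k : R) :
  lt_open tau W -> lt_open tau [set y | W (k *: y)].
Proof.
move=> oW; apply: open_local => y /= Wy.
have [e [e0 [V [oV [Vy H]]]]] := lt_scale_cont oW Wy.
exists V; split; [|split] => // v Vv /=; apply: H => //.
by rewrite subrr normr0.
Qed.
End Top.
Lemma key_lemma {R : realType} {F : normedModType R} (L : banach_lattice F)
  (tau : linear_topology F) : kadec_pelczynski L tau ->
  forall E, dispersed L E -> forall eps : R, 0 < eps ->
  exists W, lt_open tau W /\ W 0 /\ (forall y, W y -> E y -> `|y| < eps).
Proof.
move=> KP E [[E0 [ED [EZ _]]] nAD] eps eps0.
apply: contrapT => nW.
have hg : forall W, lt_open tau W -> W 0 -> exists g, W g /\ E g /\ eps <= `|g|.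
  move=> W oW W0; apply: contrapT => ng; apply: nW; exists W; split => //; split => // y Wy Ey.
  rewrite ltNge; apply/negP => hy; apply: ng; by exists y.
pose P := {W : set F | lt_open tau W /\ W 0}.
pose le (W1 W2 : P) := sval W2 `<=` sval W1.
have hf : forall W : P, exists f, sval W f /\ E f /\ `|f| = 1.
  case=> W [oW W0] /=.
  have W00 : W (0 *: (0:F)) by rewrite scaler0.
  have [e [e0 [V [oV [V0 HV]]]]] := lt_scale_cont oW W00.
  pose k := 2 / (e * eps).
  have k0 : 0 < k by rewrite divr_gt0 // mulr_gt0.
  have kE : k = 2 / (e * eps) by [].
  clearbody k.
  have D0 : [set y | V (k *: y)] 0 by rewrite /= scaler0.
  have [g [Vg [Eg geps]]] := hg _ (open_scale tau V k oV) D0.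
  have g0 : 0 < `|g| := lt_le_trans eps0 geps.
  exists (`|g|^-1 *: g); split; last split.
  - have -> : `|g|^-1 *: g = (k * `|g|)^-1 *: (k *: g).
      by rewrite scalerA invfM mulrAC mulVf ?gt_eqF // mul1r.
    apply: HV => //; rewrite subr0 ger0_norm ?invr_ge0 ?mulr_ge0 ?ltW //.
    rewrite -(ltr_pM2l (mulr_gt0 k0 g0)) mulfV ?gt_eqF ?mulr_gt0 //.
    have -> : k * `|g| * e = 2 * (`|g| / eps).
      by rewrite kE; field; rewrite ?gt_eqF ?invr_gt0 ?mulr_gt0.
    have : 1 <= `|g| / eps by rewrite ler_pdivlMr // mul1r.
    lra.
  - exact: EZ.
  - by rewrite normrZ normfV normr_id mulVf ?gt_eqF.
have [fF Hf] := choice hf.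
have top : P by exists setT; split; [exact: lt_openT|].
have dir : directed le.
  split; first by exists top.
  split; first by move=> p; rewrite /le.
  split; first by move=> p q r hpq hqr x /hqr /hpq.
  case=> X1 [p1 q1]; case=> X2 [p2 q2].
  exists (exist _ (X1 `&` X2) (conj (lt_openI p1 p2) (conj q1 q2))).
  by split => x /= [].
have nrm : forall p, `|fF p| = 1 by move=> p; have [_ []] := Hf p.
have nul : tau_null tau le fF.
  move=> U oU U0; exists (exist _ U (conj oU U0)) => p hp.
  by apply: hp; have [] := Hf p.
have [p [_ AD]] := KP P le dir fF nrm nul (fun _ => top).
apply: nAD; exists (fun n => fF (p n)); split => // n.
by have [_ []] := Hf (p n).
Qed.
Theorem mainTheorem12 (R : realType) (F : completeNormedModType R)
  (L : banach_lattice F) (tau : linear_topology F) :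
  weaker_than_norm tau -> kadec_pelczynski L tau ->
  (forall E : set F, dispersed L E ->
     (forall U : set F, open U -> exists V, lt_open tau V /\ U `&` E = V `&` E) /\
     (forall V : set F, lt_open tau V -> exists U, open U /\ V `&` E = U `&` E)) /\
  (forall (H : completeNormedModType R) (T : {linear F -> H}),
     continuous T -> DNS L T -> complements tau T).
Proof.
move=> weak KP; split.
  move=> E dE; split; last first.
    by move=> V oV; exists V; split => //; exact: weak.
  move=> U oU.
  have [[E0 [ED [EZ _]]] _] := dE.
  exists [set y | exists x W, U x /\ E x /\ lt_open tau W /\ W (y - x) /\
            (forall z, W z -> E z -> U (z + x))].
  split.
    apply: open_local => y [x [W [Ux [Ex [oW [Wyx HW]]]]]].
    exists [set y' | W (y' - x)]; split; first exact: open_translate.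
    split => // y' Wy'; exists x, W; do ! split => //.
  apply/seteqP; split => y [Uy Ey].
    split => //.
    have : nbhs y U by apply: open_nbhs_nbhs; split.
    move=> /nbhs_ballP [eps eps0 bU].
    have [W [oW [W0 HW]]] := @key_lemma R F L tau KP E dE eps eps0.
    exists y, W; do ! split => //; first by rewrite subrr.
    move=> z Wz Ez; apply: bU; rewrite -ball_normE /=.
    rewrite opprD addrA addrAC subrr add0r normrN; exact: HW.
  case: Uy => x [W [Ux [Ex [oW [Wyx HW]]]]]; split => //.
  have := HW _ Wyx; rewrite subrK; apply.
  by apply: ED => //; rewrite -scaleN1r; apply: EZ.
move=> H T Tc DNS_T [P [le [f [dir [nrm [nul ntz]]]]]].
have [r r0 Tr] : exists2 r : R, 0 < r & forall x, `|T x| <= r * `|x|.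
  have /linear_boundedP/pinfty_ex_gt0 [r r0 Hr] := continuous_linear_bounded 0 (Tc 0).
  by exists r.
have hq : forall n : nat, exists p0, forall p, le p0 p -> `| `|T (f p)| | < (n.+1%:R)^-1.
  by move=> n; apply: ntz; rewrite invr_gt0.
have [q Hq] := choice hq.
have [p [qp [_ [g [dg cg]]]]] := KP P le dir f nrm nul q.
move/cvgr0Pnorm_lt: cg => cg.
have h2 : 0 < 2^-1 :> R by rewrite invr_gt0.
have [N _ HN] := cg _ h2.
have gpos : forall n, (N <= n)%N -> 2^-1 < `|g n|.
  move=> n /HN /=; rewrite normr_id => h.
  have : `|f (p n)| <= `|f (p n) - g n| + `|g n| by rewrite -{1}(subrK (g n) (f (p n))) ler_normD.
  rewrite nrm; lra.
apply: DNS_T.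
exists (fun n => `|g (n + N)%N|^-1 *: g (n + N)%N).
have gp : forall n, 0 < `|g (n + N)%N| by move=> n; apply: lt_trans h2 (gpos _ _); rewrite leq_addl.
split; [|split].
- move=> n m nm; apply: disjoint_scale; rewrite ?invr_gt0 //.
  by apply: dg => /eqP; rewrite eqn_add2r => /eqP.
- by move=> n; rewrite normrZ normfV normr_id mulVf ?gt_eqF.
apply/cvgr0Pnorm_lt => e e0.
have e4 : 0 < e / (4 * r) by rewrite divr_gt0 // mulr_gt0.
have [N1 _ HN1] := cg _ e4.
have e4' : 0 <= 4 / e by rewrite ltW // divr_gt0.
have hB := archi_boundP e4'.
set B := Num.Def.archi_bound (4 / e) in hB.
exists (maxn N1 B) => // n /= hn.
set k := (n + N)%N.
have hk1 : (N1 <= k)%N by apply: leq_trans (leq_addr _ _); move: hn; rewrite geq_max => /andP[].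
have hkB : (B <= k)%N by apply: leq_trans (leq_addr _ _); move: hn; rewrite geq_max => /andP[].
rewrite normr_id linearZ normrZ normfV normr_id.
set gk := `|g k|.
have gk0 : 0 < gk by apply: gp.
have gk2 : 2^-1 < gk by apply: gpos; rewrite leq_addl.
have ha := Hq k (p k) (qp k); rewrite normr_id in ha.
have hb := HN1 k hk1; rewrite /= normr_id in hb.
have hTg : `|T (g k)| <= `|T (f (p k))| + r * `|f (p k) - g k|.
  rewrite {1}(_ : g k = f (p k) - (f (p k) - g k)); last by rewrite opprB addrC subrK.
  rewrite linearB; apply: le_trans (ler_normB _ _) _; rewrite lerD2l; exact: Tr.
have rb : r * `|f (p k) - g k| < e / 4.
  have -> : e / 4 = r * (e / (4 * r)) by field; rewrite gt_eqF.
  by rewrite ltr_pM2l.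
have hK : 4 / e < k.+1%:R.
  apply: lt_le_trans hB _; rewrite ler_nat; exact: leqW.
have hinv : k.+1%:R^-1 < e / 4.
  have K0 : 0 < k.+1%:R :> R by rewrite ltr0Sn.
  rewrite -(ltr_pM2l K0) mulfV ?gt_eqF //.
  move: hK; rewrite ltr_pdivrMr // => hK; lra.
rewrite -(ltr_pM2l gk0) mulrA mulfV ?gt_eqF // mul1r.
have hv : 2^-1 * e < gk * e by rewrite ltr_pM2r.
apply: le_lt_trans hTg _; apply: lt_trans hv.
have := ltrD (lt_trans ha hinv) rb.
have -> : e / 4 + e / 4 = 2^-1 * e by field.
by [].
Qed.
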